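(* Let $n\geq4$, $k\geq3$, and consider the single braided Coxeter group $W^n_k$ with generators $s_1,\dots,s_n$. For all $\lambda\in\mathbb{N}_0$ and $1\le r\le n$, the element represented by $\mathbf{s}=(s_1s_2\cdots s_n)^\lambda s_1\cdots s_r$ satisfies \[ l_R(\omega(\mathbf{s}))\leq \lambda(n-2)+r-2\cdot\mathbf{1}_{(\lambda+\mathbf{1}_{r\geq 2})\geq k}\cdot\left(1+\left\lfloor\frac{\lambda-k+\mathbf{1}_{r\geq2}}{k-1}\right\rfloor\right). \]
   Context: $W^n_k=\langle s_1,\dots,s_n\mid s_i^2=(s_is_j)^{k}=1\ \forall i\neq j\rangle$. $\omega$ maps a word over $\{s_1,\dots,s_n\}$ to the element it represents. $l_R$ is the reflection length: minimal number of reflections (conjugates of generators) whose product is the element. For a condition $P$, $\mathbf{1}_P$ equals $1$ if $P$ holds and $0$ otherwise. *)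

(* Defs.v *)
From mathcomp Require Import all_boot all_order all_algebra.
From mathcomp Require Import boolp.
Unset Printing Implicit Defensive.

(* Words over the generators s_1..s_n; the letter (i : 'I_n) stands for s_(i+1). *)
Definition word (n : nat) := seq 'I_n.

(* The congruence on words defining W^n_k = < s_1..s_n | s_i^2 = (s_i s_j)^k = 1 (i<>j) >:
   two words are equivalent iff they represent the same element, i.e. omega u = omega v. *)
Inductive weq (n k : nat) : word n -> word n -> Prop :=
| weq_refl u : weq n k u u
| weq_sym u v : weq n k u v -> weq n k v u
| weq_trans u v w : weq n k u v -> weq n k v w -> weq n k u w
| weq_ctx (a b u v : word n) : weq n k u v -> weq n k (a ++ u ++ b) (a ++ v ++ b)
| weq_sq (i : 'I_n) : weq n k [:: i; i] [::]
| weq_braid (i j : 'I_n) : i != j -> weq n k (flatten (nseq k [:: i; j])) [::].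

(* A reflection is a conjugate g s_i g^{-1}; since generators are involutions,
   g^{-1} is represented by the reversed word. *)
Definition is_reflection (n : nat) (t : word n) : Prop :=
  exists (g : word n) (i : 'I_n), t = g ++ [:: i] ++ rev g.

Definition refl_fact (n k : nat) (w : word n) (m : nat) : Prop :=
  exists ts : seq (word n),
    [/\ size ts = m, (forall t, t \in ts -> is_reflection n t) & weq n k (flatten ts) w].

Lemma refl_fact_ex (n k : nat) (w : word n) : exists m, `[< refl_fact n k w m >].
Proof.
exists (size w); apply/asboolP; exists [seq [:: i] | i <- w]; split.
- by rewrite size_map.
- move=> t /mapP [i _ ->]; by exists [::], i.
- have -> : flatten [seq [:: i] | i <- w] = w by elim: w => //= a w ->.
  exact: weq_refl.
Qed.

Definition reflection_length (n k : nat) (w : word n) : nat :=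
  ex_minn (refl_fact_ex n k w).

Definition coxeter_power_word (n lambda r : nat) : word n :=
  flatten (nseq lambda (enum 'I_n)) ++ take r (enum 'I_n).

(* Main.v *)
Require Import Defs.
From mathcomp Require Import all_boot all_order all_algebra.
Import Order.TTheory GRing.Theory Num.Theory.
From mathcomp Require Import boolp.
From mathcomp Require Import zify.
Set Implicit Arguments.
Unset Strict Implicit.

Arguments weq_refl {n k}.
Arguments weq_sym {n k u v}.
Arguments weq_trans {n k u v w}.
Arguments weq_ctx {n k}.
Arguments weq_sq {n k}.
Arguments weq_braid {n k}.

Section Gen.
Variables n k : nat.
Local Notation weq := (weq n k).

Lemma weq_catl (a u v : word n) : weq u v -> weq (a ++ u) (a ++ v).
Proof. by move=> h; have := weq_ctx a [::] _ _ h; rewrite !cats0. Qed.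
Lemma weq_catr (b u v : word n) : weq u v -> weq (u ++ b) (v ++ b).
Proof. by move=> h; exact: (weq_ctx [::] b _ _ h). Qed.
Lemma weq_cat (u u' v v' : word n) : weq u u' -> weq v v' -> weq (u ++ v) (u' ++ v').
Proof. move=> h1 h2; apply: weq_trans (weq_catr _ h1) (weq_catl _ h2). Qed.

Lemma rev_cancel (x : word n) : weq (x ++ rev x) [::].
Proof.
elim: x => [|i x IH] /=; first exact: weq_refl.
rewrite rev_cons -cats1 catA.
have := weq_ctx [:: i] [:: i] _ _ IH; rewrite cat0s /= => h.
apply: weq_trans h _; exact: weq_sq.
Qed.
Lemma rev_cancel' (x : word n) : weq (rev x ++ x) [::].
Proof. by have := rev_cancel (rev x); rewrite revK. Qed.

Definition Rle (w : word n) (h : nat) := exists2 d, (d <= h)%N & refl_fact n k w d.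

Lemma Rle_weq u v h : weq u v -> Rle u h -> Rle v h.
Proof.
move=> e [d le [ts [s r e1]]]; exists d => //; exists ts; split => //.
exact: weq_trans e1 e.
Qed.
Lemma Rle_mono w h h' : (h <= h')%N -> Rle w h -> Rle w h'.
Proof. by move=> l [d le f]; exists d => //; apply: leq_trans l. Qed.
Lemma Rle_e w : weq w [::] -> Rle w 0.
Proof. move=> e; exists 0 => //; exists [::]; split => // ; exact: weq_sym. Qed.
Lemma Rle_1 i : Rle [:: i] 1.
Proof.
exists 1 => //; exists [:: [:: i]]; split => //.
  by move=> t; rewrite inE => /eqP ->; exists [::], i.
exact: weq_refl.
Qed.

Lemma conj_flat (x : word n) (ts : seq (word n)) :
  weq (flatten (map (fun t => x ++ t ++ rev x) ts)) (x ++ flatten ts ++ rev x).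
Proof.
elim: ts => [|t ts IH] /=; first exact: weq_sym (rev_cancel x).
apply: weq_trans (weq_catl _ IH) _.
have -> : (x ++ t ++ rev x) ++ x ++ flatten ts ++ rev x =
          (x ++ t) ++ (rev x ++ x) ++ (flatten ts ++ rev x) by rewrite !catA.
apply: weq_trans (weq_ctx _ _ _ _ (rev_cancel' x)) _.
rewrite cat0s !catA; exact: weq_refl.
Qed.

Lemma Rle_ins x y z a b : Rle (x ++ z) a -> Rle y b -> Rle (x ++ y ++ z) (a + b).
Proof.
move=> [d1 l1 [ts [s1 r1 e1]]] [d2 l2 [us [s2 r2 e2]]].
exists (d1 + d2); first exact: leq_add.
exists (map (fun t => x ++ t ++ rev x) us ++ ts); split.
- by rewrite size_cat size_map s1 s2 addnC.
- move=> t; rewrite mem_cat => /orP [/mapP [u uin ->]|]; last exact: r1.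
  have [g [i ->]] := r2 u uin; exists (x ++ g), i.
  by rewrite rev_cat !catA.
- rewrite flatten_cat.
  apply: weq_trans (weq_cat (conj_flat x us) e1) _.
  apply: weq_trans (weq_catr _ (weq_catl _ (weq_catr _ e2))) _.
  have -> : (x ++ y ++ rev x) ++ x ++ z = (x ++ y) ++ (rev x ++ x) ++ z by rewrite !catA.
  apply: weq_trans (weq_ctx _ _ _ _ (rev_cancel' x)) _.
  rewrite cat0s -catA; exact: weq_refl.
Qed.

Lemma Rle_del x y z a : Rle (x ++ z) a -> Rle (x ++ y ++ z) (a + size y).
Proof.
move=> h; elim: y x a h => [|i y IH] x a h; first by rewrite addn0.
have H1 := Rle_ins (x:=x) (z:=z) h (Rle_1 i).
have := IH (x ++ [:: i]) (a + 1); rewrite -catA => /(_ H1).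
rewrite -catA /= => H2; apply: Rle_mono H2; lia.
Qed.

Lemma Rle_brack i w h : Rle w h -> Rle (i :: w ++ [:: i]) h.
Proof.
move=> hw; have h0 : Rle ([:: i] ++ [:: i]) 0 by apply: Rle_e; exact: weq_sq.
by have := Rle_ins (x:=[:: i]) (z:=[:: i]) h0 hw.
Qed.

End Gen.
Section Pairs.
Variables n k : nat.
Local Notation Rle := (@Rle n k).

Definition flat (t : nat) (X : word n) : word n := flatten (nseq t X).
Fixpoint alt (X Y : word n) t : word n := if t is t'.+1 then X ++ alt Y X t' else [::].
Definition par (X Y : word n) i := if odd i then Y else X.

Lemma flatSr t X : flat t.+1 X = flat t X ++ X.
Proof.
elim: t => [|t IH]; first by rewrite /flat /= cats0.
change (X ++ flat t.+1 X = flat t.+1 X ++ X).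
by rewrite {1}IH catA.
Qed.

Lemma flat_rot t X Y : X ++ flat t (Y ++ X) = flat t (X ++ Y) ++ X.
Proof.
elim: t => [|t IH]; first by rewrite cats0.
by rewrite /flat /= -/(flat t _) -!catA IH.
Qed.

Lemma alt_2t t l X Y : alt X Y (2 * t + l) = flat t (X ++ Y) ++ alt X Y l.
Proof.
elim: t => [|t IH] //.
have -> : 2 * t.+1 + l = (2 * t + l).+2 by lia.
by rewrite /= IH /flat /= -!catA.
Qed.

Lemma alt_split i l X Y : alt X Y (i + l) = alt X Y i ++ alt (par X Y i) (par Y X i) l.
Proof.
elim: i X Y => [|i IH] X Y //=.
rewrite IH -catA; congr (_ ++ (_ ++ alt _ _ _)); by rewrite /par /=; case: (odd i).
Qed.

Lemma delO H O t x w h :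
  Rle (x ++ flat t H ++ w) h -> Rle (x ++ flat t (H ++ O) ++ w) (h + t * size O).
Proof.
elim: t x h => [|t IH] x h; first by rewrite addn0.
move=> Hr0; have Hr : Rle (x ++ (H ++ flat t H) ++ w) h := Hr0.
change (Rle (x ++ ((H ++ O) ++ flat t (H ++ O)) ++ w) (h + t.+1 * size O)).
rewrite -!catA catA in Hr.
have H1 := Rle_del O Hr; rewrite -catA in H1.
have := IH (x ++ H ++ O) (h + size O); rewrite -!catA => /(_ H1) H2.
apply: Rle_mono H2; rewrite mulSn; lia.
Qed.

Definition pairOK (H : word n) := exists h1 h2, H = [:: h1; h2] /\ h1 != h2.

Lemma flatk H : pairOK H -> Rle (flat k H) 0.
Proof. by move=> [h1 [h2 [-> ne]]]; apply: Rle_e; apply: weq_braid. Qed.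

Lemma Y1 H O : (1 <= k)%N -> pairOK H -> Rle (H ++ flat (k - 1) (O ++ H)) ((k - 1) * size O).
Proof.
move=> k1 pH; rewrite flat_rot.
have := @delO H O (k - 1) [::] H 0; rewrite add0n; apply.
rewrite cat0s -flatSr; have -> : (k - 1).+1 = k by lia.
exact: flatk.
Qed.

Lemma Y2 H O : (2 <= k)%N -> pairOK H ->
  Rle (H ++ flat (k - 2) (H ++ O) ++ H) ((k - 2) * size O).
Proof.
move=> k2 pH; have [m km] : exists m, k = m.+2 by exists (k - 2); lia.
have -> : k - 2 = m by lia.
have := @delO H O m H H 0; rewrite add0n; apply.
have := flatk pH; rewrite km flatSr => hh.
by rewrite catA.
Qed.

Lemma D1 t a b : Rle (flat t [:: a; b] ++ [:: a]) 1.
Proof.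
elim: t a b => [|t IH] a b; first exact: Rle_1.
have -> : flat t.+1 [:: a; b] ++ [:: a] = a :: (flat t [:: b; a] ++ [:: b]) ++ [:: a].
  have := flat_rot t.+1 [:: a] [:: b]; rewrite /= => <-.
  by rewrite flatSr -catA.
exact: Rle_brack.
Qed.

Lemma D2 t a b : Rle (flat t [:: a; b]) 2.
Proof.
case: t => [|t]; first by apply: (Rle_mono (h:=0)) => //; apply: Rle_e; exact: weq_refl.
have -> : flat t.+1 [:: a; b] = [::] ++ [:: a] ++ (flat t [:: b; a] ++ [:: b]).
  by have := flat_rot t [:: b] [:: a]; rewrite /= => <-.
have := Rle_ins (x:=[::]) (D1 t b a) (Rle_1 k a); by [].
Qed.

End Pairs.
Lemma Rle_eqw n k (u v : word n) h h' : u = v -> (h <= h')%N -> @Rle n k u h -> @Rle n k v h'.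
Proof. by move=> -> hh; apply: Rle_mono. Qed.

Section Core.
Variables (n k : nat) (a b c d : 'I_n).
Hypotheses (hab : a != b) (hcd : c != d) (k3 : (3 <= k)%N).
Local Notation Rle := (@Rle n k).
Local Notation flat := (@flat n).
Local Notation alt := (@alt n).
Local Notation par := (@par n).

Let A : word n := [:: a; b].
Let B : word n := [:: c; d].

Lemma pOK i : pairOK (par A B i).
Proof. by rewrite /par; case: (odd i); [exists c, d | exists a, b]. Qed.
Lemma sz2 i : size (par B A i) = 2.
Proof. by rewrite /par; case: (odd i). Qed.

Definition St tl i j h := Rle (alt A B i ++ alt (par B A i) (par A B i) j ++ tl) h.

Lemma St_congr tl i j h i' j' h' : i = i' -> j = j' -> (h <= h')%N -> St tl i j h -> St tl i' j' h'.
Proof. by move=> -> -> hh; apply: Rle_mono. Qed.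

Lemma R1 tl i j h : St tl i j h ->
  Rle (alt A B (i + (1 + 2 * (k - 1) + j)) ++ tl) (h + (k - 1) * 2).
Proof.
move=> st.
have hh := Rle_ins (x:=alt A B i) (z:= alt (par B A i) (par A B i) j ++ tl) st
  (Y1 (par B A i) (ltac:(lia) : (1 <= k)%N) (pOK i)).
apply: Rle_eqw hh; last by rewrite sz2.
rewrite alt_split -addnA add1n /= alt_2t.
by rewrite !catA.
Qed.

Lemma R2 tl i j h : St tl i j h -> St tl i.+1 (2 * (k - 2) + 1 + j) (h + (k - 2) * 2).
Proof.
move=> st.
have hh := Rle_ins (x:=alt A B i) (z:= alt (par B A i) (par A B i) j ++ tl) st
  (Y2 (par B A i) (ltac:(lia) : (2 <= k)%N) (pOK i)).
apply: Rle_eqw hh; last by rewrite sz2.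
have e1 : par B A i.+1 = par A B i by rewrite /par /=; case: (odd i).
have e2 : par A B i.+1 = par B A i by rewrite /par /=; case: (odd i).
rewrite /St e1 e2 -(addn1 i) (alt_split i 1) -(addnA (2 * (k - 2)) 1 j) alt_2t add1n /=.
by rewrite !cats0 !catA.
Qed.

Lemma Iter tl i j h q : St tl i j h ->
  St tl (i + q) (q * (2 * (k - 2) + 1) + j) (h + q * ((k - 2) * 2)).
Proof.
move=> st; elim: q => [|q IH].
  by apply: St_congr st => //; lia.
have := R2 IH; apply: St_congr; first lia.
  by rewrite mulSn; lia.
by rewrite mulSn; lia.
Qed.

Lemma coreV lam : Rle (flat lam (A ++ B) ++ A)
  (if (k <= lam + 1)%N then 2 * lam + 2 - 2 * (1 + (lam + 1 - k) %/ (k - 1)) else 2 * lam + 2).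
Proof.
case: leqP => hk; last first.
  have := @delO n k A B lam [::] A 2; rewrite /= => /(_ _) H.
  apply: Rle_mono (H _); first by rewrite /=; lia.
  by rewrite -flatSr; exact: D2.
set J := (lam + 1 - k) %/ (k - 1); set s := (lam + 1 - k) %% (k - 1).
have hd : lam + 1 - k = J * (k - 1) + s by rewrite /J /s -divn_eq.
have hs : (s < k - 1)%N by rewrite /s ltn_pmod //; lia.
have [i0 [j0 [h0 [st [e1 e2]]]]] : exists i0 j0 h0, St [::] i0 j0 h0 /\ i0 + 1 + j0 = 2 * s + 1 /\ h0 = 2 * s.
  case: (posnP s) => s0.
    exists 0, 0, 0; split; last by rewrite s0.
    by apply: Rle_e; exact: weq_refl.
  exists 1, (2 * (s - 1) + 1), (2 * s); split; last by lia.
  rewrite /St /= alt_2t /=.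
  have := @delO n k A B (s - 1) A A 2; rewrite /= => /(_ _) H.
  apply: Rle_eqw (H _); [by rewrite !cats0 | lia |].
  have hh := D2 k (s - 1).+2 a b; rewrite flatSr in hh; exact: hh.
have := R1 (Iter J st); apply: Rle_eqw; last first.
  have h1 : J * (k - 1) = J * (k - 2) + J.
    by rewrite -mulnSr; congr (_ * _); lia.
  rewrite e2; lia.
have -> : flat lam (A ++ B) ++ A = alt A B (2 * lam + 1) by rewrite alt_2t /= ?cats0.
rewrite cats0; congr (alt _ _ _).
have h1 : J * (k - 1) = J * (k - 2) + J by rewrite -mulnSr; congr (_ * _); lia.
have h2 : J * (2 * (k - 2) + 1) = 2 * (J * (k - 2)) + J by rewrite mulnDr mulnCA muln1.
lia.
Qed.

Lemma coreU lam : Rle (flat lam (A ++ B) ++ [:: a])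
  (if (k <= lam)%N then 2 * lam + 1 - 2 * (1 + (lam - k) %/ (k - 1)) else 2 * lam + 1).
Proof.
case: leqP => hk; last first.
  have := @delO n k A B lam [::] [:: a] 1; rewrite /= => /(_ _) H.
  apply: Rle_mono (H _); first by rewrite /=; lia.
  exact: D1.
set J := (lam - k) %/ (k - 1); set s := (lam - k) %% (k - 1).
have hd : lam - k = J * (k - 1) + s by rewrite /J /s -divn_eq.
have hs : (s < k - 1)%N by rewrite /s ltn_pmod //; lia.
have st : St [:: a] 1 (2 * s) (2 * s + 1).
  rewrite /St /= -(addn0 (2 * s)) alt_2t /=.
  have := @delO n k A B s A [:: a] 1; rewrite /= => /(_ _) H.
  apply: Rle_eqw (H _); [by rewrite !cats0 | lia |].
  exact: (D1 k s.+1 a b).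
have := R1 (Iter J st); apply: Rle_eqw; last first.
  have h1 : J * (k - 1) = J * (k - 2) + J.
    by rewrite -mulnSr; congr (_ * _); lia.
  lia.
have -> : flat lam (A ++ B) ++ [:: a] = alt A B (2 * lam + 0) ++ [:: a] by rewrite alt_2t /= ?cats0.
congr (alt _ _ _ ++ _).
have h1 : J * (k - 1) = J * (k - 2) + J by rewrite -mulnSr; congr (_ * _); lia.
have h2 : J * (2 * (k - 2) + 1) = 2 * (J * (k - 2)) + J by rewrite mulnDr mulnCA muln1.
lia.
Qed.

End Core.
Lemma rl_le n k (w : word n) h : @Rle n k w h -> (reflection_length n k w <= h)%N.
Proof.
move=> [d dh f]; rewrite /reflection_length; case: ex_minnP => m _ Hmin.
by apply: leq_trans (Hmin d _) dh; apply/asboolP.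
Qed.

Lemma enum4 n : (4 <= n)%N -> exists (a b c d : 'I_n) rest,
  enum 'I_n = [:: a; b; c; d] ++ rest /\ a != b /\ c != d /\ size rest = n - 4.
Proof.
move=> n4; move: (val_enum_ord n) (size_enum_ord n).
case: (enum 'I_n) => [|a [|b [|c [|d rest]]]] /=; try by move=> _ e; rewrite -e in n4.
move=> ev es; exists a, b, c, d, rest; split => //.
have en : n = (n - 4).+4 by lia.
have hi : iota 0 n = [:: 0; 1; 2; 3] ++ iota 4 (n - 4) by rewrite {1}en.
move: ev; rewrite hi /= => -[va vb vc vd _].
split; first by apply/eqP => e; move: va vb; rewrite e => ->.
split; first by apply/eqP => e; move: vc vd; rewrite e => ->.
lia.
Qed.

Lemma main_nat (n k lam r : nat) :
  (4 <= n)%N -> (3 <= k)%N -> (1 <= r)%N -> (r <= n)%N ->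
  (reflection_length n k (coxeter_power_word n lam r) +
   (if (k <= lam + (1 < r))%N
     then (2 * (1 + (lam + (1 < r) - k) %/ (k - 1)))%N
     else 0%N) <= lam * (n - 2) + r)%N.
Proof.
move=> n4 k3 r1 rn.
have [a [b [c [d [rest [e [hab [hcd hsz]]]]]]]] := enum4 n4.
have hm : lam * (n - 2) = lam * (n - 4) + lam * 2 by rewrite -mulnDr; congr (_ * _); lia.
rewrite /coxeter_power_word e.
case: (ltnP 1 r) => hr; last first.
  have -> : r = 1 by lia.
  have H := @delO n k ([:: a; b] ++ [:: c; d]) rest lam [::] [:: a] _ (coreU hab hcd k3 lam).
  have := rl_le H; rewrite hsz /= addn0.
  have hJ : ((lam - k) %/ (k - 1) <= lam - k)%N by apply: leq_div.
  move=> hrl; rewrite /flat in hrl; rewrite ?addn0.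
  move: hJ hrl; set J := (lam - k) %/ (k - 1); move=> hJ hrl.
  move: hm hrl; set P := lam * (n - 4); set Q := lam * (n - 2); move=> hm hrl; clearbody J P Q.
  move: hrl; set R := reflection_length _ _ _; clearbody R => hrl.
  case: (leqP k lam) => hk.
    by rewrite hk in hrl *; lia.
  by rewrite (leqNgt k lam) hk /= in hrl; lia.
have H := @delO n k ([:: a; b] ++ [:: c; d]) rest lam [::] [:: a; b] _ (coreV hab hcd k3 lam).
have H1 : @Rle n k ((flat lam (([:: a; b] ++ [:: c; d]) ++ rest) ++ [:: a; b]) ++ [::])
  ((if (k <= lam + 1)%N then 2 * lam + 2 - 2 * (1 + (lam + 1 - k) %/ (k - 1)) else 2 * lam + 2)
   + lam * size rest) by rewrite cats0; exact: H.
have H2 := Rle_del (take (r - 2) ([:: c; d] ++ rest)) H1.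
rewrite size_take /= hsz in H2.
have -> : flatten (nseq lam ([:: a; b; c; d] ++ rest)) ++ take r ([:: a; b; c; d] ++ rest)
  = (flat lam (([:: a; b] ++ [:: c; d]) ++ rest) ++ [:: a; b]) ++ take (r - 2) ([:: c; d] ++ rest) ++ [::].
  rewrite -{1}(subnK hr) addn2 /= cats0 -catA //.
have := rl_le H2.
have hJ : ((lam + 1 - k) %/ (k - 1) <= lam + 1 - k)%N by apply: leq_div.
have hr2 : (if (r - 2 < (n - 4).+2)%N then r - 2 else (n - 4).+2) = r - 2.
  by case: ltnP => hh; lia.
move=> hrl; rewrite hr2 in hrl => /=.
move: hJ hrl; set J := (lam + 1 - k) %/ (k - 1); move=> hJ hrl.
move: hm hrl; set P := lam * (n - 4); set Q := lam * (n - 2); move=> hm hrl; clearbody J P Q.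
move: hrl; set R := reflection_length _ _ _; clearbody R => hrl.
case: (leqP k (lam + 1)) => hk.
  by rewrite hk in hrl; lia.
by rewrite (leqNgt k (lam + 1)) hk /= in hrl; lia.
Qed.

Local Open Scope ring_scope.

Theorem mainTheorem14 (n k lambda r : nat) :
  (4 <= n)%N -> (3 <= k)%N -> (1 <= r)%N -> (r <= n)%N ->
  (reflection_length n k (coxeter_power_word n lambda r))%:Z <=
  (lambda * (n - 2) + r)%N%:Z
  - (if (k <= lambda + (1 < r))%N
     then (2 * (1 + (lambda + (1 < r) - k) %/ (k - 1)))%N
     else 0%N)%:Z.
Proof.
move=> n4 k3 r1 rn.
have H := @main_nat n k lambda r n4 k3 r1 rn.
move: H; set R := reflection_length _ _ _; set X := (if _ then _ else _); set N := (_ + r)%N.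
clearbody R X N => H.
rewrite lerBrDr -PoszD lez_nat; exact: H.
Qed.
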